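(* Let $\mathcal{M}$ be any mechanism that always returns a \textsc{Min-Max} outcome (an outcome minimizing $\max_{i\in N}d_i(\mathbf{o})$). Then $\mathcal{M}$ is not strategyproof: there exist an instance $(N,P,T,(\mathbf{D}_i)_{i\in N})$, an agent $i\in N$ and a disapproval vector $\mathbf{D}'_i$ with $d_i(\mathcal{M}(\mathcal{D}_{-i},\mathbf{D}'_i))<d_i(\mathcal{M}(\mathcal{D}_{-i},\mathbf{D}_i))$.
   Context: An instance is $(N,P,T,(\mathbf{D}_i)_{i\in N})$ with agents $N=[n]$, projects $P$, timesteps $T=[\ell]$, and disapproval vectors $\mathbf{D}_i=(D_{i1},\dots,D_{i\ell})$, $D_{ik}\subseteq P$. An outcome is $\mathbf{o}\in P^\ell$ and $d_i(\mathbf{o})=|\{k\in T:o_k\in D_{ik}\}|$, computed with respect to $i$'s true disapproval vector. A mechanism maps each instance to an outcome; it is strategyproof if for every instance, every agent $i$ and every $\mathbf{D}'_i$, $d_i(\mathcal{M}(\mathcal{D}_{-i},\mathbf{D}_i))\le d_i(\mathcal{M}(\mathcal{D}_{-i},\mathbf{D}'_i))$, where $\mathcal{D}_{-i}$ is the list of disapproval vectors of the agents other than $i$. *)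

(* Defs.v *)
From mathcomp Require Import all_boot.
Set Implicit Arguments. Unset Strict Implicit. Unset Printing Implicit Defensive.

(* Agents N = 'I_n, projects P = 'I_p (p = m.+1 > 0 in mechanisms), timesteps T = 'I_l. *)
Definition dvec (p l : nat) := {ffun 'I_l -> {set 'I_p}}.
Definition profile (n p l : nat) := {ffun 'I_n -> dvec p l}.
Definition outcome (p l : nat) := {ffun 'I_l -> 'I_p}.

Definition disutil n p l (D : profile n p l) (i : 'I_n) (o : outcome p l) : nat :=
  #|[set k : 'I_l | o k \in D i k]|.

Definition maxdis n p l (D : profile n p l) (o : outcome p l) : nat :=
  \max_(i < n) disutil D i o.

Definition is_minmax n p l (D : profile n p l) (o : outcome p l) : Prop :=
  forall o' : outcome p l, maxdis D o <= maxdis D o'.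

Definition update n p l (D : profile n p l) (i : 'I_n) (Di' : dvec p l) : profile n p l :=
  [ffun j => if j == i then Di' else D j].

Definition mechanism :=
  forall (n m l : nat), profile n m.+1 l -> outcome m.+1 l.

(* Main.v *)
Require Import Defs.
From mathcomp Require Import all_boot.

Notation t0 := (@Ordinal 3 0 isT : 'I_3).
Notation t1 := (@Ordinal 3 1 isT : 'I_3).
Notation t2 := (@Ordinal 3 2 isT : 'I_3).
Notation p0 := (@Ordinal 2 0 isT : 'I_2).
Notation p1 := (@Ordinal 2 1 isT : 'I_2).
Notation a0 := (@Ordinal 2 0 isT : 'I_2).
Notation a1 := (@Ordinal 2 1 isT : 'I_2).

Definition D0 : dvec 2 3 := [ffun k : 'I_3 => if val k == 2 then [set p0] else set0].
Definition D1 : dvec 2 3 :=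
  [ffun k : 'I_3 => if val k == 1 then setT else if val k == 2 then [set p1] else set0].
Definition V : dvec 2 3 := [ffun k : 'I_3 => if val k == 2 then [set p0] else setT].
Definition D : profile 2 2 3 := [ffun j : 'I_2 => if j == a0 then D0 else D1].
Definition D' : profile 2 2 3 := update D a0 V.
Definition ostar : outcome 2 3 := [ffun k => p0].
Definition o' : outcome 2 3 := [ffun k : 'I_3 => if val k == 2 then p1 else p0].

Lemma I2_cases (x : 'I_2) : x = p0 \/ x = p1.
Proof. case: x => [[|[|x]] Hx] //; [left|right]; exact: val_inj. Qed.

Lemma le_max n p l (E : profile n p l) i o : disutil E i o <= maxdis E o.
Proof. exact: (@leq_bigmax _ (fun i => disutil E i o)). Qed.

Lemma L1 (o : outcome 2 3) : o t2 = p1 -> 2 <= disutil D a1 o.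
Proof.
move=> H; rewrite /disutil.
apply: (@leq_trans #|[set t1; t2]|); first by rewrite cards2.
apply: subset_leq_card; apply/subsetP => k; rewrite !inE !ffunE /=.
by case/orP => /eqP -> /=; rewrite ?inE ?H ?eqxx.
Qed.

Lemma L2 (o : outcome 2 3) : o t2 = p0 -> 1 <= disutil D a0 o.
Proof.
move=> H; rewrite /disutil.
apply: (@leq_trans #|[set t2]|); first by rewrite cards1.
apply: subset_leq_card; apply/subsetP => k; rewrite !inE !ffunE /=.
by move=> /eqP -> /=; rewrite ?inE ?H ?eqxx.
Qed.

Lemma L3 : maxdis D ostar <= 1.
Proof.
apply/bigmax_leqP => i _; case: (I2_cases i) => ->; rewrite /disutil.
- apply: (@leq_trans #|[set t2]|); last by rewrite cards1.
 apply: subset_leq_card; apply/subsetP => k; rewrite !inE !ffunE /=.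
  by case: k => [[|[|[|k]]] Hk] //=; rewrite ?inE ?eqxx.
- apply: (@leq_trans #|[set t1]|); last by rewrite cards1.
 apply: subset_leq_card; apply/subsetP => k; rewrite !inE !ffunE /=.
  by case: k => [[|[|[|k]]] Hk] //=; rewrite ?inE ?eqxx.
Qed.

Lemma L4 (o : outcome 2 3) : o t2 = p0 -> 3 <= disutil D' a0 o.
Proof.
move=> H; rewrite /disutil.
apply: (@leq_trans #|[set: 'I_3]|); first by rewrite cardsT card_ord.
apply: subset_leq_card; apply/subsetP => k; rewrite !inE !ffunE /=.
case: k => [[|[|[|k]]] Hk] //=.
have E : Ordinal Hk = t2 by exact: val_inj.
by rewrite E H ?inE ?eqxx.
Qed.

Lemma L5 : maxdis D' o' <= 2.
Proof.
apply/bigmax_leqP => i _; case: (I2_cases i) => ->; rewrite /disutil.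
- apply: (@leq_trans #|[set t0; t1]|); last by rewrite cards2.
 apply: subset_leq_card; apply/subsetP => k; rewrite !inE !ffunE /=.
  by case: k => [[|[|[|k]]] Hk] //=; rewrite ?inE ?eqxx.
- apply: (@leq_trans #|[set t1; t2]|); last by rewrite cards2.
 apply: subset_leq_card; apply/subsetP => k; rewrite !inE !ffunE /=.
  by case: k => [[|[|[|k]]] Hk] //=; rewrite ?inE ?eqxx.
Qed.

Lemma L6 (o : outcome 2 3) : o t2 = p1 -> disutil D a0 o = 0.
Proof.
move=> H; apply/eqP; rewrite /disutil cards_eq0; apply/eqP/setP => k.
rewrite !inE !ffunE /=.
case: k => [[|[|[|k]]] Hk]; rewrite ?inE //.
have E : Ordinal Hk = t2 by exact: val_inj.
by rewrite E H.
Qed.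

Theorem proposition2 (M : mechanism)
  (HM : forall (n m l : nat) (D : profile n m.+1 l), is_minmax D (M n m l D)) :
  exists (n m l : nat) (D : profile n m.+1 l) (i : 'I_n) (Di' : dvec m.+1 l),
    disutil D i (M n m l (update D i Di')) < disutil D i (M n m l D).
Proof.
exists 2, 1, 3, D, a0, V.
have h1 : maxdis D (M 2 1 3 D) <= 1 := leq_trans (HM 2 1 3 D ostar) L3.
have h2 : maxdis D' (M 2 1 3 D') <= 2 := leq_trans (HM 2 1 3 D' o') L5.
have e1 : M 2 1 3 D t2 = p0.
  case: (I2_cases (M 2 1 3 D t2)) => // /L1 H.
  by have := leq_trans H (leq_trans (le_max _ _ _ _ _ _) h1).
have e2 : M 2 1 3 D' t2 = p1.
  case: (I2_cases (M 2 1 3 D' t2)) => // /L4 H.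
  by have := leq_trans H (leq_trans (le_max _ _ _ _ _ _) h2).
rewrite -/D' (L6 _ e2); exact: (L2 _ e1).
Qed.
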